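(* For every set of formulas $\Delta$ and every formula $\varphi$ of $\mathrm{PRED2}_0$: if $\Delta\vdash_{\mathrm{PRED2}_0}\varphi$ then $\lceil\Delta\rceil,\Gamma(\Delta\cup\{\varphi\})\vdash_{\mathcal I_0}\lceil\varphi\rceil$.
   Context: $\mathrm{PRED2}_0$: types $\mathcal T::=o\mid\mathcal B\mid\mathcal B\to\mathcal T$ with $\mathcal B$ a finite set of base types; for each type $\tau$, countable sets $V_\tau$ of variables and $\Sigma_\tau$ of constants; terms of type $\tau$: variables, constants, applications $t_1t_2$ ($t_1\in T_{\sigma\to\tau}$, $t_2\in T_\sigma$, $\sigma\in\mathcal B$); formulas (type $o$) additionally include $\varphi\supset\psi$ and $\forall x.\varphi$ for $x\in V_\sigma$, $\sigma\in\mathcal B\cup\{o\}$; $\alpha$-equivalent formulas identified. Derivation rules: axiom $\Delta,\varphi\vdash\varphi$; $\supset$-introduction (from $\Delta,\varphi\vdash\psi$ infer $\Delta\vdash\varphi\supset\psi$); modus ponens; $\forall$-introduction (from $\Delta\vdash\varphi$ infer $\Delta\vdash\forall x_\tau.\varphi$ if $x_\tau\notin FV(\Delta)$); $\forall$-elimination (from $\Delta\vdash\forall x_\tau.\varphi$ infer $\Delta\vdash\varphi[x/t]$, $t\in T_\tau$). For arbitrary $\Delta$, derivability means from a finite subset. $\mathcal I_0$: primitive constants $\Sigma$ contain $\Xi$, $L$, $A_\tau$ ($\tau\in\mathcal B$) and every constant of every $\Sigma_\tau$; variables of $\mathrm{PRED2}_0$ are variables of $\mathcal I_0$; terms are type-free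 lambda-terms over $\Sigma$. Abbreviations: $I=\lambda x.x$, $K=\lambda xy.x$, $H=\lambda x.L(Kx)$, $\supset\;=\lambda xy.\Xi(Kx)(Ky)$ (infix), $F=\lambda xyf.\Xi x(\lambda z.y(fz))$. Axioms: $\Gamma,t\vdash t$; $\Gamma\vdash LH$; $\Gamma\vdash LA_\tau$ ($\tau\in\mathcal B$). Rules: (Eq) from $\Gamma\vdash t_1$, $t_1=_{\beta\eta}t_2$ infer $\Gamma\vdash t_2$; ($H_i$) from $\Gamma\vdash t$ infer $\Gamma\vdash Ht$; ($\Xi_e$) from $\Gamma\vdash\Xi t_1t_2$, $\Gamma\vdash t_1t_3$ infer $\Gamma\vdash t_2t_3$; ($\Xi_i$) from $\Gamma,t_1x\vdash t_2x$, $\Gamma\vdash Lt_1$ infer $\Gamma\vdash\Xi t_1t_2$; ($\Xi_H$) from $\Gamma,t_1x\vdash H(t_2x)$, $\Gamma\vdash Lt_1$ infer $\Gamma\vdash H(\Xi t_1t_2)$; in the last two $x\notin FV(\Gamma,t_1,t_2)$. For arbitrary $\Gamma$, $\Gamma\vdash_{\mathcal I_0}t$ means derivable from a finite subset. Set $A_o=H$ and $A_{\tau_1\to\tau_2}=FA_{\tau_1}A_{\tau_2}$. Translation $\lceil\cdot\rceil$: $\lceil x\rceil=x$, $\lceil c\rceil=c$, $\lceil t_1t_2\rceil=\lceil t_1\rceil\lceil t_2\rceil$, $\lceil\varphi\supset\psi\rceil=\lceil\varphi\rceil\supset\lceil\psi\rceil$, $\lceil\forall x.\varphi\rceil=\Xi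 A_\tau(\lambda x.\lceil\varphi\rceil)$ for $x\in V_\tau$; $\lceil\Delta\rceil$ is the image of $\Delta$. For a set of formulas $\Delta$, $\Gamma(\Delta)$ consists of: $A_\tau x$ for every $x\in FV(\Delta)$ with $x\in V_\tau$; $A_\tau c$ for every $c\in\Sigma_\tau$ and every $\tau$; $LA_\tau$ for every $\tau\in\mathcal B$; and, for each $\tau\in\mathcal B$, $A_\tau y$ for some chosen variable $y\in V_\tau$ with $y\notin FV(\Delta)$. *)

(* Defs.v *)
(* PRED2_0 and I_0 in locally nameless representation:
   free variables are names (type, index), bound variables are de Bruijn
   indices, so alpha-equivalent formulas/terms are literally equal. *)
From Stdlib Require Import List.
Import ListNotations.
Set Implicit Arguments.

Inductive ty (B : Type) : Type :=
| To : ty B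
| Tb : B -> ty B
| Tarr : B -> ty B -> ty B.
Arguments To {B}.

(* variables: V_tau = { (tau, n) | n : nat } (countably infinite per type);
   they are shared by PRED2_0 and I_0 *)
Definition var (B : Type) : Type := (ty B * nat)%type.

Definition quantifiable (B : Type) (s : ty B) : Prop :=
  match s with To => True | Tb _ => True | Tarr _ _ => False end.

Section Syntax.
Variable B : Type.
Variable Sig : ty B -> Type.

Inductive pterm : Type :=
| PFVar : var B -> pterm
| PBVar : nat -> pterm
| PConst : forall t : ty B, Sig t -> pterm
| PApp : pterm -> pterm -> pterm
| PImp : pterm -> pterm -> pterm
| PAll : ty B -> pterm -> pterm.   (* PAll s phi binds PBVar 0, of type s *)

(* typing: G gives the types of the bound variables *)
Inductive has_type : list (ty B) -> pterm -> ty B -> Prop :=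
| ht_fvar G x : has_type G (PFVar x) (fst x)
| ht_bvar G i t : nth_error G i = Some t -> has_type G (PBVar i) t
| ht_const G t c : has_type G (@PConst t c) t
| ht_app G t1 t2 b t :
    has_type G t1 (Tarr b t) -> has_type G t2 (Tb b) -> has_type G (PApp t1 t2) t
| ht_imp G p q : has_type G p To -> has_type G q To -> has_type G (PImp p q) To
| ht_all G s p : quantifiable s -> has_type (s :: G) p To -> has_type G (PAll s p) To.

Definition is_term (t : pterm) (s : ty B) : Prop := has_type [] t s.
Definition is_formula (p : pterm) : Prop := has_type [] p To.

Fixpoint popen_rec (k : nat) (u : pterm) (t : pterm) : pterm :=
  match t with
  | PFVar x => PFVar x
  | PBVar i => if Nat.eqb i k then u else PBVar i
  | PConst c => PConst c
  | PApp t1 t2 => PApp (popen_rec k u t1) (popen_rec k u t2)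
  | PImp t1 t2 => PImp (popen_rec k u t1) (popen_rec k u t2)
  | PAll s p => PAll s (popen_rec (S k) u p)
  end.
(* popen p t = p[x/t] where PAll s p = forall x. (...) *)
Definition popen (p u : pterm) : pterm := popen_rec 0 u p.

Fixpoint pfv (t : pterm) : list (var B) :=
  match t with
  | PFVar x => [x]
  | PBVar _ => []
  | PConst _ => []
  | PApp t1 t2 => pfv t1 ++ pfv t2
  | PImp t1 t2 => pfv t1 ++ pfv t2
  | PAll _ p => pfv p
  end.

Definition pfvs (D : list pterm) : list (var B) := flat_map pfv D.

Inductive P_der : list pterm -> pterm -> Prop :=
| P_ax D p : In p D -> is_formula p -> P_der D p
| P_impI D p q : is_formula p -> P_der (p :: D) q -> P_der D (PImp p q)
| P_mp D p q : P_der D (PImp p q) -> P_der D p -> P_der D q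
| P_allI D p x :
    quantifiable (fst x) -> ~ In x (pfvs D) -> ~ In x (pfv p) ->
    P_der D (popen p (PFVar x)) -> P_der D (PAll (fst x) p)
| P_allE D s p t :
    P_der D (PAll s p) -> is_term t s -> P_der D (popen p t).

Definition P_derives (Delta : pterm -> Prop) (p : pterm) : Prop :=
  exists l : list pterm, (forall q, In q l -> Delta q) /\ P_der l p.

Definition inFV (Delta : pterm -> Prop) (x : var B) : Prop :=
  exists q, Delta q /\ In x (pfv q).

Inductive iconst : Type :=
| CXi : iconst
| CL : iconst
| CA : B -> iconst
| CS : forall t : ty B, Sig t -> iconst.

Inductive iterm : Type :=
| IFVar : var B -> iterm
| IBVar : nat -> iterm
| IConst : iconst -> iterm
| IApp : iterm -> iterm -> iterm
| ILam : iterm -> iterm.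

Fixpoint iopen_rec (k : nat) (u : iterm) (t : iterm) : iterm :=
  match t with
  | IFVar x => IFVar x
  | IBVar i => if Nat.eqb i k then u else IBVar i
  | IConst c => IConst c
  | IApp t1 t2 => IApp (iopen_rec k u t1) (iopen_rec k u t2)
  | ILam t1 => ILam (iopen_rec (S k) u t1)
  end.
Definition iopen (t u : iterm) : iterm := iopen_rec 0 u t.

Fixpoint ifv (t : iterm) : list (var B) :=
  match t with
  | IFVar x => [x]
  | IBVar _ => []
  | IConst _ => []
  | IApp t1 t2 => ifv t1 ++ ifv t2
  | ILam t1 => ifv t1
  end.
Definition ifvs (G : list iterm) : list (var B) := flat_map ifv G.

Fixpoint lc_at (k : nat) (t : iterm) : Prop :=
  match t with
  | IFVar _ => True
  | IBVar i => i < k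
  | IConst _ => True
  | IApp t1 t2 => lc_at k t1 /\ lc_at k t2
  | ILam t1 => lc_at (S k) t1
  end.
Definition lc (t : iterm) : Prop := lc_at 0 t.

Inductive beq : iterm -> iterm -> Prop :=
| beq_refl t : beq t t
| beq_sym t u : beq t u -> beq u t
| beq_trans t u v : beq t u -> beq u v -> beq t v
| beq_beta t u : lc (ILam t) -> lc u -> beq (IApp (ILam t) u) (iopen t u)
| beq_eta t : lc t -> beq (ILam (IApp t (IBVar 0))) t
| beq_app t1 t2 u1 u2 : beq t1 t2 -> beq u1 u2 -> beq (IApp t1 u1) (IApp t2 u2)
| beq_lam t u x : ~ In x (ifv t) -> ~ In x (ifv u) ->
    beq (iopen t (IFVar x)) (iopen u (IFVar x)) -> beq (ILam t) (ILam u).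

Definition IXi : iterm := IConst CXi.
Definition IL : iterm := IConst CL.
Definition IAb (b : B) : iterm := IConst (CA b).
Definition II : iterm := ILam (IBVar 0).
Definition IK : iterm := ILam (ILam (IBVar 1)).
Definition IH : iterm := ILam (IApp IL (IApp IK (IBVar 0))).
(* (imp) = \xy. Xi (K x) (K y) *)
Definition IImpC : iterm :=
  ILam (ILam (IApp (IApp IXi (IApp IK (IBVar 1))) (IApp IK (IBVar 0)))).
Definition IImp (a b : iterm) : iterm := IApp (IApp IImpC a) b.
(* F = \xyf. Xi x (\z. y (f z)) *)
Definition IF : iterm :=
  ILam (ILam (ILam (IApp (IApp IXi (IBVar 2))
                         (ILam (IApp (IBVar 2) (IApp (IBVar 1) (IBVar 0))))))).

Inductive I_der : list iterm -> iterm -> Prop :=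
| I_ax G t : In t G -> I_der G t
| I_LH G : I_der G (IApp IL IH)
| I_LA G b : I_der G (IApp IL (IAb b))
| I_Eq G t1 t2 : I_der G t1 -> beq t1 t2 -> I_der G t2
| I_Hi G t : I_der G t -> I_der G (IApp IH t)
| I_Xe G t1 t2 t3 :
    I_der G (IApp (IApp IXi t1) t2) -> I_der G (IApp t1 t3) -> lc t3 ->
    I_der G (IApp t2 t3)
| I_Xi G t1 t2 x :
    I_der (IApp t1 (IFVar x) :: G) (IApp t2 (IFVar x)) -> I_der G (IApp IL t1) ->
    ~ In x (ifvs G) -> ~ In x (ifv t1) -> ~ In x (ifv t2) ->
    I_der G (IApp (IApp IXi t1) t2)
| I_XH G t1 t2 x :
    I_der (IApp t1 (IFVar x) :: G) (IApp IH (IApp t2 (IFVar x))) ->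
    I_der G (IApp IL t1) ->
    ~ In x (ifvs G) -> ~ In x (ifv t1) -> ~ In x (ifv t2) ->
    I_der G (IApp IH (IApp (IApp IXi t1) t2)).

Definition I_derives (Gam : iterm -> Prop) (t : iterm) : Prop :=
  exists l : list iterm, (forall u, In u l -> Gam u) /\ I_der l t.

Fixpoint Aty (t : ty B) : iterm :=
  match t with
  | To => IH
  | Tb b => IAb b
  | Tarr b t' => IApp (IApp IF (IAb b)) (Aty t')
  end.

Fixpoint tr (t : pterm) : iterm :=
  match t with
  | PFVar x => IFVar x
  | PBVar i => IBVar i
  | PConst c => IConst (CS c)
  | PApp t1 t2 => IApp (tr t1) (tr t2)
  | PImp p q => IImp (tr p) (tr q)
  | PAll s p => IApp (IApp IXi (Aty s)) (ILam (tr p))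
  end.

Definition trSet (Delta : pterm -> Prop) : iterm -> Prop :=
  fun t => exists q, Delta q /\ t = tr q.

Definition GammaSet (Delta : pterm -> Prop) (y : B -> var B) : iterm -> Prop :=
  fun t =>
    (exists x, inFV Delta x /\ t = IApp (Aty (fst x)) (IFVar x))
    \/ (exists (s : ty B) (c : Sig s), t = IApp (Aty s) (IConst (CS c)))
    \/ (exists b, t = IApp IL (IAb b))
    \/ (exists b, t = IApp (IAb b) (IFVar (y b))).

Definition good_choice (Delta : pterm -> Prop) (y : B -> var B) : Prop :=
  forall b, fst (y b) = Tb b /\ ~ inFV Delta (y b).

End Syntax.

(* Main.v *)
Require Import Defs.
From Stdlib Require Import List Lia Arith ClassicalEpsilon.
Import ListNotations.

#[local] Arguments PFVar {B Sig} _.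
#[local] Arguments PBVar {B Sig} _.
#[local] Arguments PConst {B Sig} _ _.
#[local] Arguments PApp {B Sig} _ _.
#[local] Arguments PImp {B Sig} _ _.
#[local] Arguments PAll {B Sig} _ _.
#[local] Arguments IFVar {B Sig} _.
#[local] Arguments IBVar {B Sig} _.
#[local] Arguments IApp {B Sig} _ _.
#[local] Arguments ILam {B Sig} _.
#[local] Arguments CS {B Sig} _ _.
#[local] Arguments CXi {B Sig}.
#[local] Arguments CL {B Sig}.
#[local] Arguments CA {B Sig} _.
#[local] Arguments IXi {B Sig}.
#[local] Arguments IL {B Sig}.
#[local] Arguments IAb {B Sig} _.
#[local] Arguments IK {B Sig}.
#[local] Arguments IH {B Sig}.
#[local] Arguments IImpC {B Sig}.
#[local] Arguments IF {B Sig}.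
#[local] Arguments Aty {B Sig} _.

Section S.
Variable B : Type.
Variable Sig : ty B -> Type.
Notation pterm := (pterm Sig).
Notation iterm := (iterm Sig).

Fixpoint isub (s : var B -> iterm) (t : iterm) : iterm :=
  match t with
  | IFVar x => s x
  | IBVar i => IBVar i
  | IConst c => IConst c
  | IApp a b => IApp (isub s a) (isub s b)
  | ILam a => ILam (isub s a)
  end.

Lemma lc_mono : forall (t : iterm) k k', lc_at k t -> k <= k' -> lc_at k' t.
Proof. induction t; simpl; intros; intuition eauto; try lia. eapply IHt; eauto; lia. Qed.

Lemma lc0 : forall (t : iterm) k, lc t -> lc_at k t.
Proof. intros; eapply lc_mono; eauto; lia. Qed.

Lemma open_lc : forall (t : iterm) k j u, lc_at k t -> k <= j -> iopen_rec j u t = t.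
Proof.
  induction t; simpl; intros; auto.
  - destruct (Nat.eqb_spec n j); auto; lia.
  - destruct H; f_equal; eauto.
  - f_equal; eapply IHt; eauto; lia.
Qed.

Lemma open_lc0 : forall (t : iterm) j u, lc t -> iopen_rec j u t = t.
Proof. intros; eapply open_lc; eauto; lia. Qed.

Lemma lc_Aty : forall s k, lc_at k (@Aty B Sig s).
Proof. induction s; simpl; intros; repeat split; auto; try lia. Qed.

Lemma ifv_Aty : forall s, ifv (@Aty B Sig s) = [].
Proof. induction s; simpl; auto. Qed.

Lemma isub_closed : forall s (t : iterm), ifv t = [] -> isub s t = t.
Proof.
  induction t; simpl; intros; auto; try discriminate.
  - apply app_eq_nil in H; destruct H; f_equal; auto.
  - f_equal; auto.
Qed.

Lemma isub_Aty : forall s t, isub s (Aty t) = Aty t.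
Proof. intros; apply isub_closed, ifv_Aty. Qed.

Lemma isub_ext : forall s s' (t : iterm), (forall x, In x (ifv t) -> s x = s' x) -> isub s t = isub s' t.
Proof.
  induction t; simpl; intros; auto.
  f_equal; [apply IHt1|apply IHt2]; intros; apply H; apply in_or_app; auto.
  f_equal; auto.
Qed.

Lemma isub_id : forall s (t : iterm), (forall x, In x (ifv t) -> s x = IFVar x) -> isub s t = t.
Proof.
  induction t; simpl; intros; auto.
  f_equal; [apply IHt1|apply IHt2]; intros; apply H; apply in_or_app; auto.
  f_equal; auto.
Qed.

Lemma isub_lc : forall s (t : iterm) k, (forall x, lc (s x)) -> lc_at k t -> lc_at k (isub s t).
Proof.
  induction t; simpl; intros; auto.
  apply lc0; auto. intuition.
Qed.

Lemma isub_open : forall s (t : iterm) k u, (forall x, lc (s x)) ->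
  isub s (iopen_rec k u t) = iopen_rec k (isub s u) (isub s t).
Proof.
  induction t; simpl; intros; auto.
  - rewrite open_lc0; auto.
  - destruct (Nat.eqb n k); auto.
  - f_equal; auto.
  - f_equal; auto.
Qed.

Lemma ifv_tr : forall p : pterm, ifv (tr p) = pfv p.
Proof.
  induction p; simpl; auto; try (rewrite IHp1, IHp2; auto).
  rewrite ifv_Aty; auto.
Qed.

Lemma tr_open : forall (p : pterm) k u, tr (popen_rec k u p) = iopen_rec k (tr u) (tr p).
Proof.
  induction p; simpl; intros; auto.
  - destruct (Nat.eqb n k); auto.
  - f_equal; auto.
  - unfold IImp. simpl. rewrite IHp1, IHp2. reflexivity.
  - rewrite IHp, (open_lc0 (Aty t)); auto. apply lc_Aty.
Qed.

Lemma ht_weak : forall G (u : pterm) s, has_type G u s -> forall G', has_type (G ++ G') u s.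
Proof.
  induction 1; intros; try (econstructor; eauto).
  rewrite nth_error_app1; auto. apply nth_error_Some. congruence.
Qed.

Lemma ht_subst : forall (p : pterm) G s t u, has_type (G ++ [s]) p t -> has_type [] u s ->
  has_type G (popen_rec (length G) u p) t.
Proof.
  induction p; simpl; intros G s0 t0 u Hp Hu; inversion Hp; subst.
  - constructor.
  - destruct (Nat.eqb_spec n (length G)).
    + subst. rewrite nth_error_app2 in H1 by lia. rewrite Nat.sub_diag in H1. simpl in H1.
      inversion H1; subst. apply (ht_weak _ _ _ Hu).
    + constructor. assert (n < length (G ++ [s0])) by (apply nth_error_Some; congruence).
      rewrite length_app in H; simpl in H.
      rewrite nth_error_app1 in H1 by lia. auto.
  - constructor.
  - econstructor; eauto.
  - constructor; eauto.
  - constructor; auto. apply (IHp (t :: G) s0); auto.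
Qed.

Lemma ht_close : forall (p : pterm) G x t, has_type G (popen_rec (length G) (PFVar x) p) t ->
  has_type (G ++ [fst x]) p t.
Proof.
  induction p; simpl; intros G x0 t0 Hp.
  - inversion Hp; subst; constructor.
  - destruct (Nat.eqb_spec n (length G)).
    + subst. inversion Hp; subst. constructor. rewrite nth_error_app2 by lia.
      rewrite Nat.sub_diag; reflexivity.
    + inversion Hp; subst; constructor. rewrite nth_error_app1; auto.
      apply nth_error_Some; congruence.
  - inversion Hp; subst; constructor.
  - inversion Hp; subst; econstructor; eauto.
  - inversion Hp; subst; constructor; eauto.
  - inversion Hp; subst; constructor; auto. apply (IHp (t :: G)); auto.
Qed.

Lemma ht_lc : forall G (t : pterm) s, has_type G t s -> lc_at (length G) (tr t).
Proof.
  induction 1; simpl; auto.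
  - apply nth_error_Some; congruence.
  - unfold IImp; simpl; repeat split; auto; lia.
  - repeat split; auto. apply lc_Aty.
Qed.

Lemma der_formula : forall D (p : pterm), P_der D p -> is_formula p.
Proof.
  unfold is_formula; induction 1; auto.
  - constructor; auto.
  - inversion IHP_der1; auto.
  - constructor; auto. apply (ht_close p [] x). auto.
  - inversion IHP_der; subst. apply (ht_subst p [] s); auto.
Qed.


Lemma lcK : forall k, lc_at k (@IK B Sig).
Proof. intros; simpl; lia. Qed.

Lemma betaK : forall (A u : iterm), lc A -> lc u -> beq (IApp (IApp IK A) u) A.
Proof.
  intros A u HA Hu.
  eapply beq_trans. apply beq_app. apply beq_beta; unfold lc; simpl; auto; try lia. apply beq_refl.
  unfold iopen; simpl.
  eapply beq_trans. apply beq_beta; unfold lc; simpl; auto. apply lc0; auto.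
  unfold iopen; rewrite open_lc0; auto. apply beq_refl.
Qed.

Lemma betaImp : forall (A C : iterm), lc A -> lc C ->
  beq (IImp A C) (IApp (IApp IXi (IApp IK A)) (IApp IK C)).
Proof.
  intros A C HA HC. unfold IImp.
  eapply beq_trans. apply beq_app. apply beq_beta; unfold lc; simpl; auto; try lia. apply beq_refl.
  unfold iopen; simpl.
  eapply beq_trans. apply beq_beta; unfold lc; simpl; repeat split; auto; try lia. apply lc0; auto.
  unfold iopen; simpl; rewrite open_lc0; auto. apply beq_refl.
Qed.

Lemma betaH : forall (A : iterm), lc A -> beq (IApp IH A) (IApp IL (IApp IK A)).
Proof.
  intros A HA. eapply beq_trans. apply beq_beta; unfold lc; simpl; auto; try lia.
  unfold iopen; simpl. apply beq_refl.
Qed.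

Lemma betaF : forall (a b f : iterm), lc a -> lc b -> lc f ->
  beq (IApp (IApp (IApp IF a) b) f)
      (IApp (IApp IXi a) (ILam (IApp b (IApp f (IBVar 0))))).
Proof.
  intros a b f Ha Hb Hf.
  eapply beq_trans. apply beq_app. apply beq_app. apply beq_beta; unfold lc; simpl; auto; try lia.
  apply beq_refl. apply beq_refl.
  unfold iopen; simpl.
  eapply beq_trans. apply beq_app. apply beq_beta; unfold lc; simpl; repeat split; auto; try lia.
  apply lc0; auto. apply beq_refl.
  unfold iopen; simpl. rewrite (open_lc0 a); auto.
  eapply beq_trans. apply beq_beta; unfold lc; simpl; repeat split; auto; try lia.
  apply lc0; auto. apply lc0; auto.
  unfold iopen; simpl. rewrite (open_lc0 a), (open_lc0 b); auto. apply beq_refl.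
Qed.

Lemma beta1 : forall (t u : iterm), lc_at 1 t -> lc u -> beq (IApp (ILam t) u) (iopen t u).
Proof. intros; apply beq_beta; auto. Qed.


Lemma fresh_aux : forall (l : list (var B)) x, In x l -> snd x <= fold_right max 0 (map snd l).
Proof. induction l; simpl; intros; [contradiction|]. destruct H; subst; [lia|]. specialize (IHl _ H); lia. Qed.

Lemma fresh : forall (l : list (var B)) (s : ty B), exists x, fst x = s /\ ~ In x l.
Proof.
  intros l s. exists (s, S (fold_right max 0 (map snd l))). split; auto.
  intro H. apply fresh_aux in H. simpl in H. lia.
Qed.

Fixpoint pconsts (p : pterm) : list iterm :=
  match p with
  | PFVar _ => []
  | PBVar _ => []
  | PConst t c => [IApp (Aty t) (IConst (CS t c))]
  | PApp a b => pconsts a ++ pconsts b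
  | PImp a b => pconsts a ++ pconsts b
  | PAll _ a => pconsts a
  end.

Fixpoint psize (p : pterm) : nat :=
  match p with
  | PApp a b => S (psize a + psize b)
  | PImp a b => S (psize a + psize b)
  | PAll _ a => S (psize a)
  | _ => 0
  end.

Lemma pconsts_open : forall (p : pterm) k x, pconsts (popen_rec k (PFVar x) p) = pconsts p.
Proof. induction p; simpl; intros; auto; try (rewrite IHp1, IHp2; auto). destruct (Nat.eqb n k); auto. Qed.

Lemma psize_open : forall (p : pterm) k x, psize (popen_rec k (PFVar x) p) = psize p.
Proof. induction p; simpl; intros; auto; try (rewrite IHp1, IHp2; auto). destruct (Nat.eqb n k); auto. Qed.

Definition upd (s : var B -> iterm) (x : var B) (u : iterm) : var B -> iterm :=
  fun z => if excluded_middle_informative (z = x) then u else s z.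

Definition lcS (s : var B -> iterm) := forall x, lc (s x).
Definition okS (G : list iterm) (s : var B -> iterm) :=
  forall x G', incl G G' -> I_der G' (IApp (Aty (fst x)) (s x)).

Lemma upd_lc : forall s x x', lcS s -> lcS (upd s x (IFVar x')).
Proof. unfold lcS, upd; intros.
  match goal with |- context [excluded_middle_informative ?P] => destruct (excluded_middle_informative P) end; auto. exact I. Qed.

Lemma upd_ok : forall G s x x', okS G s ->
  okS (IApp (Aty (fst x)) (IFVar x') :: G) (upd s x (IFVar x')).
Proof.
  unfold okS, upd; intros.
  match goal with |- context [excluded_middle_informative ?P] => destruct (excluded_middle_informative P) end.
  - subst. apply I_ax. apply H0. left; auto.
  - apply H. intros a Ha; apply H0; right; auto.
Qed.

Lemma okS_mono : forall G G' s, okS G s -> incl G G' -> okS G' s.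
Proof. unfold okS; intros. apply H. eapply incl_tran; eauto. Qed.

Lemma isub_upd : forall s x u (t : iterm), ~ In x (ifv t) -> isub (upd s x u) t = isub s t.
Proof.
  intros; apply isub_ext; intros. unfold upd.
  match goal with |- context [excluded_middle_informative ?P] => destruct (excluded_middle_informative P) end; subst; tauto.
Qed.

Lemma L_quant : forall G s, quantifiable s -> I_der G (IApp IL (@Aty B Sig s)).
Proof. intros G s H; destruct s; simpl in H; try contradiction. apply I_LH. apply I_LA. Qed.

Lemma incl_cons_tl : forall (a : iterm) G, incl G (a :: G).
Proof. intros a G x Hx; right; auto. Qed.

Lemma open_var_eq : forall s x' (p : pterm), lcS s -> ~ In x' (pfv p) ->
  isub (upd s x' (IFVar x')) (tr (popen p (PFVar x'))) = iopen (isub s (tr p)) (IFVar x').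
Proof.
  intros. unfold popen, iopen. rewrite tr_open. rewrite isub_open by (apply upd_lc; auto).
  rewrite (isub_upd s x' (IFVar x') (tr p)) by (rewrite ifv_tr; auto). simpl. unfold upd.
  match goal with |- context [excluded_middle_informative ?P] => destruct (excluded_middle_informative P) end; congruence.
Qed.

Lemma ht_const_inv : forall G t (c : Sig t) tau, has_type G (PConst t c) tau -> tau = t.
Proof. intros; inversion H; auto. Qed.

Lemma typing : forall n (t : pterm) tau, psize t < n -> is_term t tau ->
  forall s G, lcS s -> okS G s -> incl (pconsts t) G ->
  I_der G (IApp (Aty tau) (isub s (tr t))).
Proof.
  induction n; intros t tau Hn Ht s G Hlc Hok Hc; [lia|].
  unfold is_term in Ht.
  destruct t as [v|i|c0 c|t1 t2|p q|s0 p];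
    [inversion Ht; subst|inversion Ht; subst|apply ht_const_inv in Ht; subst
    |inversion Ht; subst|inversion Ht; subst|inversion Ht; subst].
  - simpl. apply Hok. apply incl_refl.
  - destruct i; discriminate.
  - apply I_ax. apply Hc. simpl; auto.
  - simpl in Hc, Hn. apply incl_app_inv in Hc as [Hc1 Hc2].
    assert (L1 : lc (isub s (tr t1))) by (apply isub_lc; auto; apply (ht_lc _ _ _ H2)).
    assert (L2 : lc (isub s (tr t2))) by (apply isub_lc; auto; apply (ht_lc _ _ _ H4)).
    pose proof (IHn t1 _ ltac:(lia) H2 s G Hlc Hok Hc1) as h1.
    pose proof (IHn t2 _ ltac:(lia) H4 s G Hlc Hok Hc2) as h2.
    change (Aty (Tarr b tau)) with (IApp (IApp IF (IAb b)) (@Aty B Sig tau)) in h1.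
    eapply I_Eq in h1; [|apply betaF; [exact I|apply lc_Aty|auto]].
    change (Aty (Tb b)) with (@IAb B Sig b) in h2.
    pose proof (I_Xe h1 h2 L2) as h3.
    eapply I_Eq; [exact h3|].
    eapply beq_trans. apply beta1; auto. unfold lc; simpl; repeat split; try lia.
    apply lc_Aty. apply lc0; auto.
    unfold iopen; simpl. rewrite (open_lc0 (Aty tau)), (open_lc0 (isub s (tr t1))); auto.
    apply beq_refl. apply lc_Aty.
  - simpl in Hc, Hn. apply incl_app_inv in Hc as [Hc1 Hc2].
    set (P := isub s (tr p)). set (Q := isub s (tr q)).
    assert (LP : lc P) by (apply isub_lc; auto; apply (ht_lc _ _ _ H2)).
    assert (LQ : lc Q) by (apply isub_lc; auto; apply (ht_lc _ _ _ H4)).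
    destruct (fresh (ifvs G ++ ifv P ++ ifv Q) To) as [x' [_ Hx']].
    pose proof (IHn p _ ltac:(lia) H2 s G Hlc Hok Hc1) as hp.
    pose proof (IHn q _ ltac:(lia) H4 s (IApp (IApp IK P) (IFVar x') :: G) Hlc
       (okS_mono _ _ _ Hok (incl_cons_tl _ _))
       (incl_tran Hc2 (incl_cons_tl _ _))) as hq.
    change (I_der G (IApp IH (IImp P Q))).
    eapply I_Eq. 2: { apply beq_app. apply beq_refl. apply beq_sym, betaImp; auto. }
    apply (I_XH (G:=G) (t1:=IApp IK P) (t2:=IApp IK Q) (x:=x')).
    + eapply I_Eq; [exact hq|]. apply beq_app. apply beq_refl. apply beq_sym, betaK; auto. exact I.
    + eapply I_Eq; [exact hp|]. apply betaH; auto.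
    + intro; apply Hx'; apply in_or_app; auto.
    + simpl; intro; apply Hx'; apply in_or_app; right; apply in_or_app; auto.
    + simpl; intro; apply Hx'; apply in_or_app; right; apply in_or_app; auto.
  - simpl in Hc, Hn.
    set (P := isub s (tr p)).
    assert (LP : lc_at 1 P) by (apply isub_lc; auto; apply (ht_lc _ _ _ H4)).
    destruct (fresh (ifvs G ++ ifv P ++ pfv p) s0) as [x' [Hfst Hx']].
    assert (Htyp : is_term (popen p (PFVar x')) To).
    { apply (ht_subst p [] s0); auto. rewrite <- Hfst; constructor. }
    pose proof (IHn (popen p (PFVar x')) To ltac:(unfold popen; rewrite psize_open; lia) Htyp
       (upd s x' (IFVar x')) (IApp (Aty (fst x')) (IFVar x') :: G) (upd_lc _ _ _ Hlc)
       (upd_ok _ _ _ _ Hok)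
       ltac:(unfold popen; rewrite pconsts_open; exact (incl_tran Hc (incl_cons_tl _ _)))) as h.
    rewrite open_var_eq in h; auto.
    2:{ intro; apply Hx'; apply in_or_app; right; apply in_or_app; auto. }
    rewrite Hfst in h.
    change (I_der G (IApp IH (IApp (IApp IXi (isub s (Aty s0))) (ILam P)))).
    rewrite isub_Aty.
    apply (I_XH (G:=G) (t1:=Aty s0) (t2:=ILam P) (x:=x')).
    + eapply I_Eq; [exact h|]. apply beq_app. apply beq_refl. apply beq_sym, beta1; auto. exact I.
    + apply L_quant; auto.
    + intro; apply Hx'; apply in_or_app; auto.
    + rewrite ifv_Aty; simpl; auto.
    + simpl; intro; apply Hx'; apply in_or_app; right; apply in_or_app; auto.
Qed.


Lemma open_var_eq2 : forall s x x' (p : pterm), lcS s -> ~ In x (pfv p) ->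
  isub (upd s x (IFVar x')) (tr (popen p (PFVar x))) = iopen (isub s (tr p)) (IFVar x').
Proof.
  intros. unfold popen, iopen. rewrite tr_open. rewrite isub_open by (apply upd_lc; auto).
  rewrite (isub_upd s x (IFVar x') (tr p)) by (rewrite ifv_tr; auto). simpl. unfold upd.
  match goal with |- context [excluded_middle_informative ?P] => destruct (excluded_middle_informative P) end; congruence.
Qed.

Lemma pconsts_form : forall (p : pterm) u, In u (pconsts p) ->
  exists t (c : Sig t), u = IApp (Aty t) (IConst (CS t c)).
Proof.
  induction p; simpl; intros; try contradiction.
  - destruct H; [|contradiction]. subst; eauto.
  - apply in_app_or in H; destruct H; auto.
  - apply in_app_or in H; destruct H; auto.
  - auto.
Qed.

Lemma inv_imp : forall (p q : pterm), is_formula (PImp p q) -> has_type [] p To /\ has_type [] q To.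
Proof. intros p q H; inversion H; auto. Qed.
Lemma inv_all : forall s (p : pterm), is_formula (PAll s p) -> has_type [s] p To.
Proof. intros s p H; inversion H; auto. Qed.

Lemma main : forall D (p : pterm), P_der D p -> exists Cs : list iterm,
  (forall u, In u Cs -> exists t (c : Sig t), u = IApp (Aty t) (IConst (CS t c))) /\
  forall s G, lcS s -> okS G s ->
    (forall q, In q D -> exists v, In v G /\ beq v (isub s (tr q))) -> incl Cs G ->
    I_der G (isub s (tr p)).
Proof.
  induction 1 as [D p Hin Hf|D p q Hf Hd IH|D p q Hd1 IH1 Hd2 IH2|D p x Hq Hx1 Hx2 Hd IH|D s0 p t Hd IH Ht].
  - exists []. split; [simpl; tauto|]. intros s G Hlc Hok HD _.
    destruct (HD p Hin) as [v [Hv Hb]]. eapply I_Eq; [apply I_ax; exact Hv|exact Hb].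
  - destruct IH as [Cs [HCs IH]]. exists (Cs ++ pconsts p). split.
    { intros u Hu; apply in_app_or in Hu; destruct Hu; auto. apply pconsts_form with p; auto. }
    intros s G Hlc Hok HD Hc. apply incl_app_inv in Hc as [Hc1 Hc2].
    set (P := isub s (tr p)). set (Q := isub s (tr q)).
    assert (LP : lc P) by (apply isub_lc; auto; apply (ht_lc _ _ _ Hf)).
    assert (LQ : lc Q) by (apply isub_lc; auto; apply (ht_lc _ _ _ (der_formula _ _ Hd))).
    destruct (fresh (ifvs G ++ ifv P ++ ifv Q) To) as [x' [_ Hx']].
    assert (hq : I_der (IApp (IApp IK P) (IFVar x') :: G) Q).
    { apply IH; auto.
      - exact (okS_mono _ _ _ Hok (incl_cons_tl _ _)).
      - intros q0 [<-|Hin].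
        + exists (IApp (IApp IK P) (IFVar x')); split; [left; reflexivity|].
          apply betaK; auto. exact I.
        + destruct (HD q0 Hin) as [v [Hv Hb]]. exists v; split; auto. right; auto.
      - exact (incl_tran Hc1 (incl_cons_tl _ _)). }
    pose proof (typing (S (psize p)) p To ltac:(lia) Hf s G Hlc Hok Hc2) as hp.
    change (I_der G (IImp P Q)).
    eapply I_Eq. 2: { apply beq_sym, betaImp; auto. }
    apply (I_Xi (G:=G) (t1:=IApp IK P) (t2:=IApp IK Q) (x:=x')).
    + eapply I_Eq; [exact hq|]. apply beq_sym, betaK; auto. exact I.
    + eapply I_Eq; [exact hp|]. apply betaH; auto.
    + intro; apply Hx'; apply in_or_app; auto.
    + simpl; intro; apply Hx'; apply in_or_app; right; apply in_or_app; auto.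
    + simpl; intro; apply Hx'; apply in_or_app; right; apply in_or_app; auto.
  - destruct IH1 as [Cs1 [HCs1 IH1]]. destruct IH2 as [Cs2 [HCs2 IH2]].
    exists (Cs1 ++ Cs2). split.
    { intros u Hu; apply in_app_or in Hu; destruct Hu; auto. }
    intros s G Hlc Hok HD Hc. apply incl_app_inv in Hc as [Hc1 Hc2].
    destruct (inv_imp _ _ (der_formula _ _ Hd1)) as [H1 H3].
    set (P := isub s (tr p)). set (Q := isub s (tr q)).
    assert (LP : lc P) by (apply isub_lc; auto; apply (ht_lc _ _ _ H1)).
    assert (LQ : lc Q) by (apply isub_lc; auto; apply (ht_lc _ _ _ H3)).
    pose proof (IH1 s G Hlc Hok HD Hc1) as h1. change (I_der G (IImp P Q)) in h1.
    eapply I_Eq in h1; [|apply betaImp; auto].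
    pose proof (IH2 s G Hlc Hok HD Hc2) as h2.
    assert (h2' : I_der G (IApp (IApp IK P) IXi)).
    { eapply I_Eq; [exact h2|]. apply beq_sym, betaK; auto. exact I. }
    pose proof (I_Xe h1 h2' I) as h3.
    eapply I_Eq; [exact h3|]. apply betaK; auto. exact I.
  - destruct IH as [Cs [HCs IH]]. exists Cs. split; auto.
    intros s G Hlc Hok HD Hc.
    assert (Hall : P_der D (PAll (fst x) p)) by (eapply P_allI; eauto).
    pose proof (der_formula _ _ Hall) as Hf.
    apply inv_all in Hf. rename Hf into H3.
    set (P := isub s (tr p)).
    assert (LP : lc_at 1 P) by (apply isub_lc; auto; apply (ht_lc _ _ _ H3)).
    destruct (fresh (ifvs G ++ ifv P) (fst x)) as [x' [_ Hx']].
    assert (h : I_der (IApp (Aty (fst x)) (IFVar x') :: G) (isub (upd s x (IFVar x')) (tr (popen p (PFVar x))))).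
    { apply IH.
      - apply upd_lc; auto.
      - apply upd_ok; auto.
      - intros q0 Hin. destruct (HD q0 Hin) as [v [Hv Hb]]. exists v; split; [right; auto|].
        rewrite isub_upd; auto. rewrite ifv_tr. intro; apply Hx1. unfold pfvs.
        apply in_flat_map. eauto.
      - exact (incl_tran Hc (incl_cons_tl _ _)). }
    rewrite open_var_eq2 in h; auto.
    change (I_der G (IApp (IApp IXi (isub s (Aty (fst x)))) (ILam P))).
    rewrite isub_Aty.
    apply (I_Xi (G:=G) (t1:=Aty (fst x)) (t2:=ILam P) (x:=x')).
    + eapply I_Eq; [exact h|]. apply beq_sym, beta1; auto. exact I.
    + apply L_quant; auto.
    + intro; apply Hx'; apply in_or_app; auto.
    + rewrite ifv_Aty; simpl; auto.
    + simpl; intro; apply Hx'; apply in_or_app; right; auto.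
  - destruct IH as [Cs [HCs IH]]. exists (Cs ++ pconsts t). split.
    { intros u Hu; apply in_app_or in Hu; destruct Hu; auto. apply pconsts_form with t; auto. }
    intros s G Hlc Hok HD Hc. apply incl_app_inv in Hc as [Hc1 Hc2].
    pose proof (inv_all _ _ (der_formula _ _ Hd)) as H3.
    set (P := isub s (tr p)). set (T := isub s (tr t)).
    assert (LP : lc_at 1 P) by (apply isub_lc; auto; apply (ht_lc _ _ _ H3)).
    assert (LT : lc T) by (apply isub_lc; auto; apply (ht_lc _ _ _ Ht)).
    pose proof (IH s G Hlc Hok HD Hc1) as h.
    change (I_der G (IApp (IApp IXi (isub s (Aty s0))) (ILam P))) in h.
    rewrite isub_Aty in h.
    pose proof (typing (S (psize t)) t s0 ltac:(lia) Ht s G Hlc Hok Hc2) as ht.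
    pose proof (I_Xe h ht LT) as h3.
    eapply I_Eq; [exact h3|].
    unfold popen. rewrite tr_open, isub_open; auto. apply beta1; auto.
Qed.

Fixpoint inh (y : B -> var B) (t : ty B) : iterm :=
  match t with
  | To => IApp IL IH
  | Tb b => IFVar (y b)
  | Tarr _ t' => ILam (inh y t')
  end.

Lemma inh_lc : forall y t, lc (inh y t).
Proof. induction t; unfold lc in *; simpl.
  - repeat split; lia.
  - exact I.
  - eapply lc_mono; eauto. Qed.

Lemma inh_ok : forall y t G, (forall b, In (IApp (IAb b) (IFVar (y b))) G) ->
  I_der G (IApp (Aty t) (inh y t)).
Proof.
  induction t as [|b|b t IHt]; intros G HG.
  - change (I_der G (IApp IH (IApp IL IH))). apply I_Hi, I_LH.
  - apply I_ax, HG.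
  - change (I_der G (IApp (IApp (IApp IF (IAb b)) (Aty t)) (ILam (inh y t)))).
    eapply I_Eq. 2: { apply beq_sym, betaF. exact I. apply lc_Aty. unfold lc; simpl. apply lc0, inh_lc. }
    destruct (fresh (ifvs G ++ ifv (inh y t)) (Tb b)) as [x' [_ Hx']].
    apply (I_Xi (G:=G) (t1:=IAb b) (t2:=ILam (IApp (Aty t) (IApp (ILam (inh y t)) (IBVar 0)))) (x:=x')).
    + eapply I_Eq. apply (IHt (IApp (IAb b) (IFVar x') :: G)). intros; right; auto.
      apply beq_sym. eapply beq_trans. apply beta1.
      unfold lc; simpl; repeat split; auto. apply lc_Aty. apply lc0, inh_lc. exact I.
      unfold iopen; simpl. rewrite (open_lc0 (Aty t)) by apply lc_Aty.
      rewrite (open_lc0 (inh y t)) by apply inh_lc.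
      apply beq_app. apply beq_refl. eapply beq_trans. apply beta1. apply lc0, inh_lc. exact I.
      unfold iopen; rewrite open_lc0 by apply inh_lc. apply beq_refl.
    + apply I_LA.
    + intro; apply Hx'; apply in_or_app; auto.
    + simpl; auto.
    + simpl. rewrite ifv_Aty; simpl. rewrite app_nil_r. intro; apply Hx'; apply in_or_app; auto.
Qed.


Lemma final (Bl : list B) (HB : forall b, In b Bl) (Delta : pterm -> Prop) (phi : pterm)
  (y : B -> var B) : P_derives Delta phi ->
  I_derives (fun t => trSet Delta t \/ GammaSet (fun q => Delta q \/ q = phi) y t) (tr phi).
Proof.
  intros [l [Hl Hd]]. destruct (main _ _ Hd) as [Cs [HCs HM]].
  set (FV := pfvs l ++ pfv phi).
  set (s := fun z => if excluded_middle_informative (In z FV) then IFVar z else inh y (fst z)).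
  set (G := map (@tr B Sig) l ++ map (fun x => IApp (Aty (fst x)) (IFVar x)) FV ++ Cs
            ++ map (fun b => IApp (IAb b) (IFVar (y b))) Bl).
  assert (Hs : forall z, In z FV -> s z = IFVar z).
  { intros z Hz; unfold s.
    match goal with |- context [excluded_middle_informative ?P] => destruct (excluded_middle_informative P) end; tauto. }
  exists G. split.
  - intros u Hu. unfold G in Hu.
    apply in_app_or in Hu; destruct Hu as [Hu|Hu].
    { apply in_map_iff in Hu as [q [<- Hq]]. left; exists q; auto. }
    apply in_app_or in Hu; destruct Hu as [Hu|Hu].
    { apply in_map_iff in Hu as [x [<- Hx]]. right; left. exists x; split; auto.
      unfold FV in Hx; apply in_app_or in Hx; destruct Hx as [Hx|Hx].
      - unfold pfvs in Hx; apply in_flat_map in Hx as [q [Hq Hxq]]. exists q; split; auto.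
      - exists phi; split; auto. }
    apply in_app_or in Hu; destruct Hu as [Hu|Hu].
    { right; right; left. apply HCs; auto. }
    apply in_map_iff in Hu as [b [<- _]]. right; right; right; right. exists b; auto.
  - assert (HyG : forall b, In (IApp (IAb b) (IFVar (y b))) G).
    { intros b; unfold G. repeat (apply in_or_app; right). apply in_map_iff; exists b; split; auto. }
    rewrite <- (isub_id s (tr phi)).
    2:{ intros x Hx; apply Hs. rewrite ifv_tr in Hx. unfold FV; apply in_or_app; auto. }
    apply HM.
    + intro z; unfold s.
      match goal with |- context [excluded_middle_informative ?P] => destruct (excluded_middle_informative P) end.
      exact I. apply inh_lc.
    + intros z G' Hinc. unfold s.
      match goal with |- context [excluded_middle_informative ?P] => destruct (excluded_middle_informative P) end.
      * apply I_ax, Hinc. unfold G. apply in_or_app; right; apply in_or_app; left.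
        apply in_map with (f := fun x => IApp (Aty (fst x)) (IFVar x)); auto.
      * apply inh_ok. intros b; apply Hinc, HyG.
    + intros q Hq. exists (tr q). split.
      * unfold G; apply in_or_app; left; apply in_map; auto.
      * rewrite isub_id. apply beq_refl. intros x Hx; apply Hs. rewrite ifv_tr in Hx.
        unfold FV; apply in_or_app; left. unfold pfvs; apply in_flat_map; eauto.
    + intros u Hu. unfold G. apply in_or_app; right; apply in_or_app; right; apply in_or_app; left; auto.
Qed.

End S.

Theorem mainTheorem8 (B : Type) (Sig : ty B -> Type)
  (HBfin : exists l : list B, forall b : B, In b l)
  (Delta : pterm Sig -> Prop) (phi : pterm Sig) (y : B -> var B) :
  (forall q, Delta q -> is_formula q) ->
  is_formula phi ->
  good_choice (fun q => Delta q \/ q = phi) y ->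
  P_derives Delta phi ->
  I_derives
    (fun t => trSet Delta t \/ GammaSet (fun q => Delta q \/ q = phi) y t)
    (tr phi).
Proof.
  intros _ _ _ Hd. destruct HBfin as [Bl HB]. exact (final B Sig Bl HB Delta phi y Hd).
Qed.
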